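(* Let $P=\{p_1=(121,204),\ p_2=(175,196),\ p_3=(216,82),\ p_4=(189,51),\ p_5=(44,96),\ p_6=(36,140),\ p_7=(127,135)\}$. Then $P$ is in general position and $\mu(D(P))=\binom{7}{2}-9=12$.
   Context: A set of points in the plane is in general position if no three of its points are collinear. The disjointness graph of segments $D(P)$ is the graph whose vertices are all closed straight-line segments with both endpoints in $P$, two being adjacent if and only if they are disjoint. For a graph $G$ and $U\subseteq V(G)$, two distinct vertices $x,y\in U$ are $U$-mutually visible if $G$ contains a shortest $x$-$y$ path none of whose internal vertices lies in $U$; $U$ is a mutual-visibility set if every two distinct vertices of $U$ are $U$-mutually visible. The mutual-visibility number $\mu(G)$ is the maximum size of a mutual-visibility set of $G$. *)

(* Defs.v *)
From HB Require Import structures.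
From mathcomp Require Import all_boot all_order all_algebra.
From mathcomp Require Import boolp.
Set Implicit Arguments. Unset Strict Implicit. Unset Printing Implicit Defensive.
Import Order.TTheory GRing.Theory Num.Theory.

Local Open Scope ring_scope.

Definition point := (rat * rat)%type.

Definition collinear (x y z : point) : Prop :=
  (y.1 - x.1) * (z.2 - x.2) - (y.2 - x.2) * (z.1 - x.1) = 0.

Definition general_position (I : finType) (p : I -> point) : Prop :=
  injective p /\
  forall i j k : I, i != j -> j != k -> i != k -> ~ collinear (p i) (p j) (p k).

Definition seg_pt (a b : point) (t : rat) : point :=
  ((1 - t) * a.1 + t * b.1, (1 - t) * a.2 + t * b.2).

Definition on_segment (a b z : point) : Prop :=
  exists t : rat, 0 <= t <= 1 /\ z = seg_pt a b t.

Definition segments_disjoint (a b c d : point) : Prop :=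
  ~ exists z : point, on_segment a b z /\ on_segment c d z.

Local Open Scope nat_scope.

Section Graph.
Variables (T : finType) (e : rel T).

(* x :: p is a walk from x to y; its length is size p *)
Definition walk (x : T) (p : seq T) (y : T) : bool :=
  path e x p && (last x p == y).

Definition shortest_path (x : T) (p : seq T) (y : T) : Prop :=
  walk x p y /\ forall q, walk x q y -> size p <= size q.

(* internal vertices of the path x :: p (all vertices but x and the last) *)
Definition internal (p : seq T) : seq T := take (size p).-1 p.

Definition mutually_visible (U : {set T}) (x y : T) : Prop :=
  exists p, shortest_path x p y /\ all (fun v => v \notin U) (internal p).

Definition mutual_visibility_set (U : {set T}) : Prop :=
  forall x y, x \in U -> y \in U -> x != y -> mutually_visible U x y.

Definition mu : nat :=
  \max_(U : {set T} | `[< mutual_visibility_set U >]) #|U|.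
End Graph.

Definition coordsP : seq (int * int) :=
  [:: (121, 204); (175, 196); (216, 82); (189, 51); (44, 96); (36, 140); (127, 135)]%Z.

Definition P (i : 'I_7) : point :=
  let c := nth (0%Z, 0%Z) coordsP i in ((c.1)%:~R, (c.2)%:~R).

(* vertices of D(P): segments p_i p_j with i < j (both endpoints in P, distinct) *)
Definition segP := {ij : 'I_7 * 'I_7 | ij.1 < ij.2}.

Definition seg_disj (s t : segP) : Prop :=
  segments_disjoint (P (val s).1) (P (val s).2) (P (val t).1) (P (val t).2).

Definition DP : rel segP := fun s t => `[< seg_disj s t >].

(* Main.v *)
Require Import Defs.
From mathcomp Require Import all_boot all_order all_algebra.
From mathcomp Require Import boolp ring lra.
Set Implicit Arguments. Unset Strict Implicit. Unset Printing Implicit Defensive.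
Import Order.TTheory GRing.Theory Num.Theory.

Section Geom.
Local Open Scope ring_scope.

Definition orient (a b c : point) : rat :=
  (b.1 - a.1) * (c.2 - a.2) - (b.2 - a.2) * (c.1 - a.1).

Lemma orient_seg a b c d t :
  orient a b (seg_pt c d t) = (1 - t) * orient a b c + t * orient a b d.
Proof. rewrite /orient /seg_pt /=; ring. Qed.

Lemma orient_self a b t : orient a b (seg_pt a b t) = 0.
Proof. rewrite /orient /seg_pt /=; ring. Qed.

Lemma sep_disj a b c d :
  0 < orient a b c * orient a b d -> segments_disjoint a b c d.
Proof.
move=> h [z [[t [ht ->]] [u [/andP [u0 u1] e]]]].
have : orient a b (seg_pt a b t) = orient a b (seg_pt c d u) by rewrite e.
rewrite orient_self orient_seg.
move: h; generalize (orient a b c) (orient a b d) => oc od h E.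
case: (eqVneq u 0) => [u0' | un0].
  by move: E h; rewrite u0' subr0 mul1r mul0r addr0 => <-; rewrite mul0r ltxx.
have up : 0 < u by rewrite lt0r un0.
have h1 : 0 <= (1 - u) * (oc * oc) by apply: mulr_ge0; [lra | nra].
have h2 : 0 < u * (oc * od) by apply: mulr_gt0.
have h3 : 0 = ((1 - u) * oc + u * od) * oc by rewrite -E mul0r.
move: h3; rewrite mulrDl -!mulrA => h3. lra.
Qed.

Definition sepb (a b c d : point) : bool :=
  (0 < orient a b c * orient a b d) || (0 < orient c d a * orient c d b).

Lemma sepb_disj a b c d : sepb a b c d -> segments_disjoint a b c d.
Proof.
case/orP => [/sep_disj // | /sep_disj h] [z [h1 h2]]; apply: h.
by exists z.
Qed.

Definition sgnpos (x y : rat) : bool := ((0 < x) && (0 < y)) || ((x < 0) && (y < 0)).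
Definition sgnneg (x y : rat) : bool := ((0 < x) && (y < 0)) || ((x < 0) && (0 < y)).

Lemma sgnposP x y : sgnpos x y -> 0 < x * y.
Proof. by case/orP => /andP [h1 h2]; nra. Qed.

Lemma sgnnegP x y : sgnneg x y -> x * y < 0.
Proof. by case/orP => /andP [h1 h2]; nra. Qed.

Definition sepb2 (a b c d : point) : bool :=
  sgnpos (orient a b c) (orient a b d) || sgnpos (orient c d a) (orient c d b).

Lemma sepb2_disj a b c d : sepb2 a b c d -> segments_disjoint a b c d.
Proof. by case/orP => /sgnposP h; apply: sepb_disj; rewrite /sepb h ?orbT. Qed.

Definition crossb (a b c d : point) : bool :=
  sgnneg (orient a b c) (orient a b d) && sgnneg (orient c d a) (orient c d b).

Lemma cross_ndisj a b c d : crossb a b c d -> ~ segments_disjoint a b c d.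
Proof.
case/andP => /sgnnegP h1 /sgnnegP h2; apply.
set oa := orient c d a; set ob := orient c d b.
set oc := orient a b c; set od := orient a b d.
have n1 : oa - ob != 0 by apply/eqP => e; move: h2; rewrite -/oa -/ob; nra.
have n2 : oc - od != 0 by apply/eqP => e; move: h1; rewrite -/oc -/od; nra.
exists (seg_pt c d (oc / (oc - od))); split; last first.
  exists (oc / (oc - od)); split => //.
  move: h1 n2; rewrite -/oc -/od; case: (ltrgt0P oc) => hc h1 n2.
  - have hd : od < 0 by nra.
    have hp : 0 < oc - od by lra.
    by rewrite ler_pdivrMr // ler_pdivlMr // mul0r mul1r; apply/andP; split; lra.
  - have hd : 0 < od by nra.
    have hp : oc - od < 0 by lra.
    by rewrite ler_ndivrMr // ler_ndivlMr // mul0r mul1r; apply/andP; split; lra.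
  - by move: h1; rewrite hc mul0r ltxx.
exists (oa / (oa - ob)); split.
  move: h2 n1; rewrite -/oa -/ob; case: (ltrgt0P oa) => hc g1 g2.
  - have hd : ob < 0 by nra.
    have hp : 0 < oa - ob by lra.
    by rewrite ler_pdivrMr // ler_pdivlMr // mul0r mul1r; apply/andP; split; lra.
  - have hd : 0 < ob by nra.
    have hp : oa - ob < 0 by lra.
    by rewrite ler_ndivrMr // ler_ndivlMr // mul0r mul1r; apply/andP; split; lra.
  - by move: g1; rewrite hc mul0r ltxx.
clear h1 h2; move: n1 n2; rewrite /oa /ob /oc /od /orient /seg_pt; clear oa ob oc od.
case: a b c d => [a1 a2] [b1 b2] [c1 c2] [d1 d2] /= n1 n2.
congr (_, _); field; by rewrite n1 n2.
Qed.

Lemma seg_pt0 a b : seg_pt a b 0 = a.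
Proof. by case: a b => [a1 a2] [b1 b2]; rewrite /seg_pt /= subr0 !mul1r !mul0r !addr0. Qed.
Lemma seg_pt1 a b : seg_pt a b 1 = b.
Proof. by case: a b => [a1 a2] [b1 b2]; rewrite /seg_pt /= subrr !mul1r !mul0r !add0r. Qed.

Lemma share_ndisj a b c d : [|| a == c, a == d, b == c | b == d] -> ~ segments_disjoint a b c d.
Proof.
have h0 : 0 <= (0:rat) <= 1 by rewrite lexx ler01.
have h1 : 0 <= (1:rat) <= 1 by rewrite lexx ler01.
case/or4P => /eqP e; apply.
- by exists a; split; [exists 0 | exists 0]; rewrite ?seg_pt0 ?e.
- by exists a; split; [exists 0; rewrite seg_pt0 | exists 1; rewrite seg_pt1 e].
- by exists b; split; [exists 1; rewrite seg_pt1 | exists 0; rewrite seg_pt0 e].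
- by exists b; split; [exists 1 | exists 1]; rewrite ?seg_pt1 ?e.
Qed.

End Geom.


Section G.
Variables (T : finType) (e : rel T) (allT : seq T).
Hypothesis allT_total : forall x, x \in allT.

Fixpoint inball (n : nat) (x y : T) : bool :=
  if n is m.+1 then (if inball m x y then true
                     else has (fun w => if e x w then inball m w y else false) allT)
  else x == y.

Lemma walk_inball x q y : walk e x q y -> inball (size q) x y.
Proof.
elim: q x => [|z q IH] x /=; first by rewrite /walk /= => /eqP ->.
rewrite /walk /= => /andP [/andP [exz pz] lz].
have iz : inball (size q) z y by apply: IH; rewrite /walk pz lz.
case: ifP => // _; apply/hasP; exists z => //; by rewrite exz iz.
Qed.

Lemma inball_mono m n x y : m <= n -> inball m x y -> inball n x y.
Proof.
elim: n => [|n IH]; first by rewrite leqn0 => /eqP ->.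
rewrite leq_eqVlt => /orP [/eqP -> // | hm] h /=.
by rewrite IH.
Qed.

Definition good (Us : seq T) x y (p : seq T) : bool :=
  if walk e x p y then (if all (fun v => v \notin Us) (internal p) then ~~ inball (size p).-1 x y else false)
  else false.

Definition cands (y : T) : seq (seq T) :=
  [:: [:: y]] ++ [seq [:: z; y] | z <- allT] ++
  flatten [seq [seq [:: z; w; y] | w <- allT] | z <- allT].

Definition MVb (Us : seq T) : bool :=
  all (fun x => all (fun y => (x != y) ==> has (good Us x y) (cands y)) Us) Us.

Lemma good_sound Us x y p : good Us x y p ->
  shortest_path e x p y /\ all (fun v => v \notin [set z | z \in Us]) (internal p).
Proof.
rewrite /good; case: ifP => // w; case: ifP => // a n; split.
  split => // q wq; rewrite leqNgt; apply/negP => lt.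
  apply: (negP n); apply: (inball_mono _ (walk_inball wq)).
  by rewrite -ltnS; case: (size p) lt.
apply/allP => v /(allP a); by rewrite inE.
Qed.

Lemma MVb_sound Us : MVb Us -> mutual_visibility_set e [set x | x \in Us].
Proof.
move=> h x y; rewrite !inE => hx hy nxy.
have /hasP [p _ gp] := implyP (allP (allP h x hx) y hy) nxy.
by exists p; apply: good_sound.
Qed.

Definition clause (x y : T) : seq T := x :: y :: [seq z <- allT | e x z && e z y].

Definition clauses : seq (seq T) :=
  [seq clause p.1 p.2 | p <- [seq p <- [seq (x, y) | x <- allT, y <- allT] |
     [&& p.1 != p.2, ~~ e p.1 p.2 & has (fun z => e p.1 z && e z p.2) allT]]].

Lemma clause_hit (U : {set T}) : mutual_visibility_set e U ->
  forall c, c \in clauses -> has (fun v => v \in ~: U) c.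
Proof.
move=> mv c /mapP [[x y] /=]; rewrite mem_filter /= => /andP [/and3P [nxy nexy hz] _] ->.
rewrite /clause /= !inE.
case: (boolP (x \in U)) => xU //=; case: (boolP (y \in U)) => yU //=.
have [p [[wp sp] ap]] := mv x y xU yU nxy.
case/hasP: hz => z _ /andP [exz ezy].
have : size p <= 2 by apply: (sp [:: z; y]); rewrite /walk /= exz ezy eqxx.
move: wp ap; rewrite /walk.
case: p sp => [|a [|b [|c' q]]] //= sp.
- by move=> /eqP exy; rewrite exy eqxx in nxy.
- by rewrite andbT => /andP [exa /eqP eay]; move: nexy; rewrite -eay exa.
- rewrite andbT => /andP [/andP [exa eab] /eqP eb] /andP [aU _] _.
  apply/hasP; exists a; last by rewrite inE.
  by rewrite mem_filter exa -eb eab allT_total.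
Qed.

Fixpoint firstun (W : seq T) (cls : seq (seq T)) : option (seq T) :=
  if cls is c :: r then (if has (fun v => v \in W) c then firstun W r else Some c) else None.

Lemma firstunP W cls c : firstun W cls = Some c -> c \in cls /\ ~~ has (fun v => v \in W) c.
Proof.
elim: cls => [|c' r IH] //=; case: ifP => h.
  by move/IH => [h1 h2]; rewrite inE h1 orbT.
by case=> <-; rewrite inE eqxx h.
Qed.

Fixpoint allb (T' : Type) (a : T' -> bool) (s : seq T') : bool :=
  if s is x :: s' then (if a x then allb a s' else false) else true.

Lemma allbE (T' : Type) (a : T' -> bool) s : allb a s = all a s.
Proof. by elim: s => //= x s ->; case: (a x). Qed.

Fixpoint chk (k : nat) (W : seq T) (cls : seq (seq T)) : bool :=
  match firstun W cls with
  | None => false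
  | Some c => if k is k'.+1 then allb (fun v => chk k' (v :: W) cls) c else true
  end.

Lemma chk_sound k W cls (X : {set T}) : chk k W cls -> uniq W -> {subset W <= X} ->
  (forall c, c \in cls -> has (fun v => v \in X) c) -> k + size W < #|X|.
Proof.
elim: k W => [|k IH] W /=; case E: (firstun W cls) => [c|] //;
  move=> h uW sW hc; move/firstunP: E => [/hc /hasP [v vc vX] nh].
- 
  have vW : v \notin W by apply/negP => vW; apply: (negP nh); apply/hasP; exists v.
  have : size (v :: W) <= size (enum X).
    apply: uniq_leq_size; first by rewrite /= vW uW.
    by move=> z; rewrite inE mem_enum => /orP [/eqP -> // | /sW].
  by rewrite -cardE.
- rewrite allbE in h.
  have vW : v \notin W by apply/negP => vW; apply: (negP nh); apply/hasP; exists v.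
  have := IH (v :: W) (allP h v vc).
  rewrite /= vW uW addnS => /(_ isT); apply => //.
  by move=> z; rewrite inE => /orP [/eqP -> // | /sW].
Qed.

End G.

Definition Eb (s t : segP) : bool :=
  sepb2 (P (val s).1) (P (val s).2) (P (val t).1) (P (val t).2).

Definition Wb (s t : segP) : bool :=
  let a := P (val s).1 in let b := P (val s).2 in let c := P (val t).1 in let d := P (val t).2 in
  [|| a == c, a == d, b == c | b == d] || crossb a b c d.

Definition mkS (i j : nat) (hi : i < 7) (hj : j < 7) (h : i < j) : segP := exist _ (Ordinal hi, Ordinal hj) h.
Definition allS : seq segP := [:: mkS (i:=0) (j:=1) isT isT isT; mkS (i:=0) (j:=2) isT isT isT; mkS (i:=0) (j:=3) isT isT isT; mkS (i:=0) (j:=4) isT isT isT; mkS (i:=0) (j:=5) isT isT isT; mkS (i:=0) (j:=6) isT isT isT; mkS (i:=1) (j:=2) isT isT isT; mkS (i:=1) (j:=3) isT isT isT; mkS (i:=1) (j:=4) isT isT isT; mkS (i:=1) (j:=5) isT isT isT; mkS (i:=1) (j:=6) isT isT isT; mkS (i:=2) (j:=3) isT isT isT; mkS (i:=2) (j:=4) isT isT isT; mkS (i:=2) (j:=5) isT isT isT; mkS (i:=2) (j:=6) isT isT isT; mkS (i:=3) (j:=4) isT isT isT; mkS (i:=3) (j:=5) isT isT isT; mkS (i:=3) (j:=6) isT isT isT; mkS (i:=4) (j:=5) isT isT isT; mkS (i:=4) (j:=6) isT isT isT; mkS (i:=5) (j:=6) isT isT isT].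
Definition s0 : segP := mkS (i:=0) (j:=1) isT isT isT.

Lemma allS_total s : s \in allS.
Proof.
case: s => [[[i hi] [j hj]] hij].
move: hi hij; case: i => [|[|[|[|[|[|[|i]]]]]]] hi hij //;
move: hj hij; case: j => [|[|[|[|[|[|[|j]]]]]]] hj hij //.
all: by vm_compute.
Qed.

Lemma uniqS : uniq allS. Proof. by vm_compute. Qed.

Lemma card_segP : #|{: segP}| = 21.
Proof.
have hp : perm_eq (enum {: segP}) allS.
  apply: uniq_perm; first exact: enum_uniq.
    exact: uniqS.
  by move=> x; rewrite mem_enum allS_total.
by rewrite cardE (perm_size hp).
Qed.

Definition Pn (n : nat) : point :=
  let c := nth (0%Z, 0%Z) coordsP n in (((c.1)%:~R)%R, ((c.2)%:~R)%R).

Lemma gpcheck : all (fun i => all (fun j => all (fun k =>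
  [|| i == j, j == k, i == k | orient (Pn i) (Pn j) (Pn k) != 0%R]) (iota 0 7)) (iota 0 7)) (iota 0 7).
Proof. Time by vm_compute. Qed.

Lemma injcheck : all (fun i => all (fun j => (i == j) || (Pn i != Pn j)) (iota 0 7)) (iota 0 7).
Proof. Time by vm_compute. Qed.

Lemma mem_iota7 (i : 'I_7) : (i : nat) \in iota 0 7.
Proof. by rewrite mem_iota ltn_ord. Qed.

Lemma allcheck : all (fun s => all (fun t => Eb s t || Wb s t) allS) allS.
Proof. Time by vm_compute. Qed.

Definition tab : seq (seq bool) := [:: [:: false; false; false; false; false; false; false; false; false; false; false; true; true; true; true; true; true; true; true; true; true];
  [:: false; false; false; false; false; false; false; false; false; false; false; false; false; false; false; true; true; true; true; true; true];
  [:: false; false; false; false; false; false; true; false; false; false; false; false; false; false; false; false; false; false; true; true; true];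
  [:: false; false; false; false; false; false; true; true; false; false; true; true; false; false; true; false; false; true; false; false; false];
  [:: false; false; false; false; false; false; true; true; true; false; true; true; true; false; true; true; false; true; false; true; false];
  [:: false; false; false; false; false; false; true; true; false; false; false; true; true; true; false; true; true; false; true; false; false];
  [:: false; false; true; true; true; true; false; false; false; false; false; false; false; false; false; true; true; true; true; true; true];
  [:: false; false; false; true; true; true; false; false; false; false; false; false; false; false; false; false; false; false; true; true; true];
  [:: false; false; false; false; true; false; false; false; false; false; false; true; false; false; true; false; false; true; false; false; false];
  [:: false; false; false; false; false; false; false; false; false; false; false; true; true; false; true; true; false; true; false; true; false];
  [:: false; false; false; true; true; false; false; false; false; false; false; true; true; true; false; true; true; false; true; false; false];
  [:: true; false; false; true; true; true; false; false; true; true; true; false; false; false; false; false; false; false; true; true; true];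
  [:: true; false; false; false; true; true; false; false; false; true; true; false; false; false; false; false; false; false; false; false; true];
  [:: true; false; false; false; false; true; false; false; false; false; true; false; false; false; false; true; false; false; false; false; false];
  [:: true; false; false; true; true; false; false; false; true; true; false; false; false; false; false; true; true; false; true; false; false];
  [:: true; true; false; false; true; true; true; false; false; true; true; false; false; true; true; false; false; false; false; false; true];
  [:: true; true; false; false; false; true; true; false; false; false; true; false; false; false; true; false; false; false; false; false; false];
  [:: true; true; false; true; true; false; true; false; true; true; false; false; false; false; false; false; false; false; true; false; false];
  [:: true; true; true; false; false; true; true; true; false; false; true; true; false; false; true; false; false; true; false; false; false];
  [:: true; true; true; false; true; false; true; true; false; true; false; true; false; false; false; false; false; false; false; false; false];
  [:: true; true; true; false; false; false; true; true; false; false; false; true; true; false; false; true; false; false; false; false; false]].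

Definition Et (s t : segP) : bool := nth false (nth [::] tab (index s allS)) (index t allS).

Lemma tabcheck : all (fun s => all (fun t => Eb s t == Et s t) allS) allS.
Proof. Time by vm_compute. Qed.


Lemma DPE : DP = Eb.
Proof.
apply: funext => s; apply: funext => t.
rewrite /DP; case: (boolP (Eb s t)) => h.
  by apply/asboolP; apply: sepb2_disj.
apply/asboolPn; have := allP (allP allcheck s (allS_total s)) t (allS_total t).
rewrite (negbTE h) /Wb /= => /orP [/share_ndisj | /cross_ndisj] //.
Qed.

Lemma DPEt : DP = Et.
Proof.
rewrite DPE; apply: funext => s; apply: funext => t.
exact: (eqP (allP (allP tabcheck s (allS_total s)) t (allS_total t))).
Qed.

Definition U0s : seq segP := [:: nth s0 allS 3; nth s0 allS 6; nth s0 allS 11; nth s0 allS 12; nth s0 allS 13; nth s0 allS 14; nth s0 allS 15; nth s0 allS 16; nth s0 allS 17; nth s0 allS 18; nth s0 allS 19; nth s0 allS 20].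

Lemma U0check : MVb Et allS U0s.
Proof. Time by vm_compute. Qed.

Lemma chkcheck : chk 8 [::] (sort (fun c1 c2 : seq segP => size c1 <= size c2) (clauses Et allS)).
Proof. Time by vm_compute. Qed.

Lemma uniqU0 : uniq U0s. Proof. by vm_compute. Qed.

Theorem proposition3 :
  general_position P /\ mu DP = 'C(7, 2) - 9 /\ mu DP = 12.
Proof.
have hmu : mu DP = 12.
  rewrite DPEt /mu; apply/eqP; rewrite eqn_leq; apply/andP; split.
  - apply/bigmax_leqP => U /asboolP mv.
    have hits : forall c, c \in sort (fun c1 c2 : seq segP => size c1 <= size c2) (clauses Et allS) ->
        has (fun v => v \in ~: U) c.
      move=> c; rewrite mem_sort => hc.
      exact: (@clause_hit segP Et allS allS_total U mv c hc).
    have sub : {subset ([::] : seq segP) <= ~: U} by [].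
    have := chk_sound (X := ~: U) chkcheck (isT : uniq ([::] : seq segP)) sub hits.
    have := cardsC U; rewrite card_segP /= => h1 h2.
    rewrite addn0 in h2.
    have h3 : #|U| + 9 <= 21 by rewrite -h1 leq_add2l.
    by rewrite -(leq_add2r 9).
  - have mv : `[< mutual_visibility_set Et [set x | x \in U0s] >].
      by apply/asboolP; exact: (@MVb_sound segP Et allS allS_total U0s U0check).
    have := @leq_bigmax_cond _ (fun U : {set segP} => `[< mutual_visibility_set Et U >]) (fun U : {set segP} => #|U|) [set x | x \in U0s] mv.
    by rewrite cardsE (card_uniqP uniqU0).
split; last by rewrite hmu.
split.
  move=> i j e; apply: val_inj; apply/eqP.
  have := allP (allP injcheck i (mem_iota7 i)) j (mem_iota7 j).
  by rewrite -/(Pn i) -/(Pn j); case: eqP => //= _; rewrite -[Pn i]/(P i) -[Pn j]/(P j) e eqxx.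
move=> i j k hij hjk hik.
have := allP (allP (allP gpcheck i (mem_iota7 i)) j (mem_iota7 j)) k (mem_iota7 k).
have hij' : (i : nat) != j by [].
have hjk' : (j : nat) != k by [].
have hik' : (i : nat) != k by [].
rewrite (negbTE hij') (negbTE hjk') (negbTE hik') /= => /eqP h c; apply: h; exact: c.
Qed.
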